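(* Let $A$ be a totally ordered alphabet, $u\in A^*$, and $b,\ell\in A$ with $b>\ell$. Suppose that $\rho_\ell(u)$ is positive (i.e. lies in $A^*$), and that $u$ has a factor $\pi b$, where $\pi$ is a nonempty palindrome. Then $\rho_\ell(\pi)\ell^{-1}$ is a positive palindrome.
   Context: $F(A)$ is the free group on $A$, and elements of $F(A)$ lying in $A^*$ are called positive. The reversal $g\mapsto\tilde g$ is the unique anti-automorphism of $F(A)$ fixing each letter; a palindrome is an element fixed by it. For $\ell\in A$, $\rho_\ell$ is the automorphism of $F(A)$ defined on letters $a\in A$ by $\rho_\ell(a)=a\ell$ if $a<\ell$, $\rho_\ell(\ell)=\ell$, and $\rho_\ell(a)=\ell^{-1}a$ if $a>\ell$. *)

(* Defs.v *)
From mathcomp Require Import all_boot all_order.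
Set Implicit Arguments. Unset Strict Implicit. Unset Printing Implicit Defensive.
Import Order.TTheory.
Local Open Scope order_scope.

(* Free group F(A) over an alphabet A: an element is represented by its
   unique freely reduced word over A^{+-1}; a letter (a, true) is a, and
   (a, false) is a^{-1}. *)
Section FreeGroup.
Variables (d : Order.disp_t) (A : orderType d).

Definition gletter := (A * bool)%type.

Definition push (x : gletter) (acc : seq gletter) : seq gletter :=
  match acc with
  | y :: t => if (x.1 == y.1) && (x.2 != y.2) then t else x :: acc
  | [::] => [:: x]
  end.

Definition freduce (s : seq gletter) : seq gletter := foldr push [::] s.

Definition fmul (u v : seq gletter) : seq gletter := freduce (u ++ v).

Definition finv (u : seq gletter) : seq gletter :=
  rev (map (fun x => (x.1, ~~ x.2)) u).

Definition pos_word (u : seq A) : seq gletter := map (fun a => (a, true)) u.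

Definition positive (g : seq gletter) : bool := all snd (freduce g).

Definition frev (g : seq gletter) : seq gletter := freduce (rev g).

Definition palindrome (g : seq gletter) : Prop := frev g = freduce g.

Definition rho_letter (l a : A) : seq gletter :=
  if a < l then [:: (a, true); (l, true)]
  else if a == l then [:: (l, true)]
  else [:: (l, false); (a, true)].

Definition rho_gletter (l : A) (x : gletter) : seq gletter :=
  if x.2 then rho_letter l x.1 else finv (rho_letter l x.1).

Definition rho (l : A) (g : seq gletter) : seq gletter :=
  freduce (flatten (map (rho_gletter l) g)).

End FreeGroup.

(* Main.v *)
Require Import Defs.
From mathcomp Require Import all_boot all_order.
Import Order.TTheory.
Local Open Scope order_scope.

Set Implicit Arguments. Unset Strict Implicit.
Section Aux.
Variables (d : Order.disp_t) (A : orderType d) (l : A).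

Definition ee (x c : A) := ~~ ((l < x) && (l < c)).
Definition yl (x : A) : seq A := if x == l then [::] else [:: x].
Definition sep (x c : A) : seq A := if (x <= l) && (c <= l) then [:: l] else [::].
Fixpoint HH (x : A) (w : seq A) : seq A :=
  match w with [::] => yl x | c :: w' => yl x ++ sep x c ++ HH c w' end.

Lemma push_true (a : A) (r : seq (A * bool)) :
  head true (map snd r) -> push (a, true) r = (a, true) :: r.
Proof. by case: r => [|[y1 y2] t] //= ->; rewrite andbF. Qed.

Lemma push_pos (a : A) s : push (a,true) (pos_word s) = pos_word (a::s).
Proof. by rewrite push_true //; case: s. Qed.

Lemma freduce_pos (s : seq A) : freduce (pos_word s) = pos_word s.
Proof. by elim: s => //= a s IH; rewrite IH push_pos. Qed.

Lemma R_cons x w : rho l (pos_word (x::w)) = foldr (@push _ A) (rho l (pos_word w)) (rho_letter l x).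
Proof. by rewrite /rho /freduce /= foldr_cat. Qed.

Definition red_rel (x y : (A * bool)%type) := ~~ ((x.1 == y.1) && (x.2 != y.2)).

Lemma push_sorted x s : sorted red_rel s -> sorted red_rel (push x s).
Proof.
case: s => [|y t] //=. case: ifP => C.
  by move/path_sorted.
by rewrite /= /red_rel C => ->.
Qed.

Lemma freduce_sorted s : sorted red_rel (freduce s).
Proof. by elim: s => //= x s IH; apply: push_sorted. Qed.

Lemma freduce_id s : sorted red_rel s -> freduce s = s.
Proof.
elim: s => //= x s IH Hs; rewrite IH ?(path_sorted Hs) //.
case: s Hs {IH} => //= y t /andP[Hy _]; by rewrite /red_rel in Hy; rewrite (negbTE Hy).
Qed.

Lemma sc a w : sorted ee w -> ~~ (l < a) || ~~ (l < head l w) -> sorted ee (a::w).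
Proof.
case: w => //= c w -> H; rewrite andbT /ee.
by case/orP: H => /negbTE ->; rewrite ?andbF.
Qed.

Ltac spl := split; [try done | split; [try (by left); try (by right) | split; [ try (by move=> _); try (by case) | split; [ | try done]]]].

Lemma R_struct w : exists h r, rho l (pos_word w) = h ++ r /\
  (h = [::] \/ h = [:: (l,false)]) /\ (h = [::] -> ~~ (l < head l w)) /\
  (all snd r -> sorted ee w) /\ head true (map snd r).
Proof.
elim: w => [|a w [h [r [Eq [Hh [Hh2 [Hs Hr]]]]]]].
  exists [::], [::]; split => //; split; first by left.
  by split => // _; rewrite ltxx.
rewrite R_cons Eq /rho_letter.
case: ltgtP => Ha /=.
- case: Hh => Eh; subst h.
    rewrite push_true // push_true //.
    exists [::], [:: (a,true), (l,true) & r]; spl.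
    move=> /= /Hs Hw; apply: sc => //; by rewrite -leNgt (ltW Ha).
  rewrite /= eqxx /= push_true //.
  exists [::], ((a,true) :: r); spl.
  move=> /= /Hs Hw; apply: sc => //; by rewrite -leNgt (ltW Ha).
- have -> : push (a, true) (h ++ r) = (a,true) :: h ++ r.
    case: Hh => Eh; subst h => /=; first by rewrite push_true.
    by rewrite gt_eqF.
  rewrite /= eq_sym gt_eqF //=.
  exists [:: (l,false)], ((a,true) :: h ++ r); spl.
  move=> /= ; rewrite all_cat => /andP[Hh' Hr'].
  case: Hh Hh2 => Eh Hh2; subst h; last by [].
  by apply: sc; [apply: Hs | rewrite Hh2 ?orbT].
- subst a. case: Hh => Eh; subst h => /=.
    rewrite push_true //. exists [::], ((l,true) :: r); spl.
    by move=> /= /Hs Hw; apply: sc => //; rewrite ltxx.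
  rewrite eqxx /=. exists [::], r; spl.
  by move=> /Hs Hw; apply: sc => //; rewrite ltxx.
Qed.

Lemma R_good x w : sorted ee (x::w) -> rho l (pos_word (x::w)) =
  (if l < x then [:: (l,false)] else [::]) ++
  pos_word (HH x w ++ (if last x w <= l then [:: l] else [::])).
Proof.
elim: w x => [|c w IH] x.
  move=> _; rewrite R_cons /rho_letter /HH /yl /=.
  case: ltgtP => Hx /=.
  - by rewrite andbF.
  - by rewrite eq_sym gt_eqF.
  - by subst x.
move=> H; have /andP[Hxc Hp] : ee x c && sorted ee (c::w) := H.
rewrite R_cons (IH c Hp) /rho_letter /yl /sep.
set P := HH c w ++ _.
rewrite /= -!catA -/P.
move: Hxc; rewrite /ee.
case: ltgtP => Hx; case: (leP c l) => Hc //= _; rewrite ?push_pos //.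
- by rewrite /yl /sep (gt_eqF Hx) leNgt Hx /= eq_sym (gt_eqF Hx).
- by rewrite /yl /sep (lt_eqF Hx) (ltW Hx) Hc.
- by rewrite eqxx /= push_pos /yl /sep (lt_eqF Hx) (leNgt c) Hc andbF.
- by subst x; rewrite /yl /sep eqxx lexx Hc.
- by subst x; rewrite /yl /sep eqxx lexx (leNgt c) Hc.
Qed.

Lemma HH_rcons x w c : HH x (rcons w c) = HH x w ++ sep (last x w) c ++ yl c.
Proof. by elim: w x => [|b w IH] x //=; rewrite IH !catA. Qed.

Lemma last_rev_belast (c : A) (w : seq A) : last (last c w) (rev (belast c w)) = c.
Proof.
transitivity (last c (rev (c :: w))); first by rewrite [c :: w]lastI rev_rcons.
by rewrite rev_cons last_rcons.
Qed.

Lemma HH_rev x w : rev (HH x w) = HH (last x w) (rev (belast x w)).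
Proof.
elim: w x => [|c w IH] x /=.
  by rewrite /yl; case: eqP.
rewrite !rev_cat IH rev_cons HH_rcons last_rev_belast.
have -> : rev (yl x) = yl x by rewrite /yl; case: eqP.
have -> : rev (sep x c) = sep c x by rewrite /sep andbC; case: ifP.
by rewrite catA.
Qed.

Lemma sorted_catR (p q : seq A) : sorted ee (p ++ q) -> sorted ee q.
Proof. elim: p => //= a p IH H; apply: IH; exact: path_sorted H. Qed.

End Aux.

Theorem lemma4p2 (d : Order.disp_t) (A : orderType d) (u : seq A) (b l : A) :
  l < b ->
  positive (rho l (pos_word u)) ->
  forall (p pi s : seq A),
    u = p ++ pi ++ b :: s ->
    pi != [::] ->
    palindrome (pos_word pi) ->
    let w := fmul (rho l (pos_word pi)) [:: (l, false)] in
    positive w /\ palindrome w.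
Proof.
move=> lb Hpos p pi s Hu Hpi Hpal; rewrite /=.
have Hs : sorted (ee l) u.
  have [h [r [Eq [Hh [_ [Hs _]]]]]] := R_struct l u.
  move: Hpos; rewrite /positive freduce_id; last first.
    by rewrite /rho; apply: freduce_sorted.
  rewrite Eq all_cat => /andP[_]; exact: Hs.
rewrite Hu in Hs; have {Hs} := sorted_catR Hs.
clear Hu Hpos; case: pi Hpi Hpal => [//|x w0] _ Hpal.
rewrite /= cat_path /= => /andP[Hxw /andP[Hlast _]].
have Hlast' : last x w0 <= l by rewrite leNgt; move: Hlast; rewrite /ee lb andbT.
have Hrev : rev (x :: w0) = x :: w0.
  move: Hpal; rewrite /palindrome /frev -map_rev !freduce_pos.
  by apply: inj_map => a1 a2 [].
have Hrev2 : rev (x :: w0) = last x w0 :: rev (belast x w0).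
  by rewrite [x :: w0]lastI rev_rcons.
have Hx : last x w0 = x by move: Hrev; rewrite Hrev2 => -[].
have Hbw : rev (belast x w0) = w0 by move: Hrev; rewrite Hrev2 => -[].
have Hxl : ~~ (l < x) by rewrite -leNgt -Hx.
set w := fmul _ _.
have Hw : w = pos_word (HH l x w0).
  rewrite /w /fmul R_good // (negbTE Hxl) Hlast' cat0s /pos_word map_cat -catA /=.
  rewrite /freduce foldr_cat /= eqxx /=.
  exact: (freduce_pos (HH l x w0)).
rewrite Hw; split.
  by rewrite /positive freduce_pos all_map; apply/allP.
rewrite /palindrome /frev -map_rev !freduce_pos HH_rev Hx Hbw //.
Qed.
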